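(* Let $k \geq 3$ and $n \geq 2k - 4$ be integers, and let $H$ be an $n$-vertex $k$-graph with $\delta_{k-1}(H) > n/3$ and a vertex partition $\{A, B\}$ of $V(H)$ with $|A|, |B| > 0$. Suppose that $H$ contains no $(A,B)$-diamond. Then $H$ contains a proto-balancer.
   Context: $\delta_{k-1}(H)$ is the minimum over $(k-1)$-subsets of $V(H)$ of the number of edges containing it. For $x,y \in V(H)$, an $(x,y)$-diamond is a pair of edges $e,f$ with $|e\cap f| = k-1$, $x \in e \setminus f$, $y \in f \setminus e$; an $(A,B)$-diamond is an $(x,y)$-diamond with $x \in A$, $y \in B$. An $(A,B)$-proto-balancer in $H$ is given by a $(k-3)$-set $S \subseteq V(H)$ and three $3$-sets $X_1, X_2, X_3 \subseteq V(H)\setminus S$ such that: $S \cup X_i \in E(H)$ for all $i \in [3]$; $|X_1 \cap A| = |X_2 \cap A| = |X_1 \cap X_2| = |X_1 \cap X_2 \cap A| = 2$; $|X_3 \cap A| = 0$; and $|X_1 \cap X_3| = |X_2 \cap X_3| = 1$ (the proto-balancer is the subgraph with edges $S\cup X_1, S \cup X_2, S\cup X_3$). A $(B,A)$-proto-balancer is defined in the same way with the roles of $A$ and $B$ exchanged. A proto-balancer is an $(A,B)$-proto-balancer or a $(B,A)$-proto-balancer. *)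

(* Defs.v *)
From mathcomp Require Import all_boot.
Set Implicit Arguments. Unset Strict Implicit. Unset Printing Implicit Defensive.

Definition is_kgraph (T : finType) (k : nat) (E : {set {set T}}) : Prop :=
  forall e, e \in E -> #|e| = k.

Definition codeg (T : finType) (E : {set {set T}}) (S : {set T}) : nat :=
  #|[set e in E | S \subset e]|.

(* delta_{k-1}(H): minimum over (k-1)-subsets S of V(H) of codeg S.
   (#|E| is used as the neutral element; it is >= every codegree, so this is
   exactly the minimum whenever a (k-1)-subset exists.) *)
Definition min_codeg (T : finType) (k : nat) (E : {set {set T}}) : nat :=
  \big[minn/#|E|]_(S : {set T} | #|S| == k.-1) codeg E S.

Definition diamond (T : finType) (k : nat) (E : {set {set T}}) (x y : T) : Prop :=
  exists e f, [/\ e \in E, f \in E, #|e :&: f| = k.-1,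
                  x \in e :\: f & y \in f :\: e].

Definition AB_diamond (T : finType) (k : nat) (E : {set {set T}})
  (A B : {set T}) : Prop :=
  exists x y, [/\ x \in A, y \in B & diamond k E x y].

Definition AB_proto_balancer (T : finType) (k : nat) (E : {set {set T}})
  (A B : {set T}) : Prop :=
  exists (S X1 X2 X3 : {set T}),
    [/\ #|S| = k - 3,
        [/\ #|X1| = 3, #|X2| = 3 & #|X3| = 3],
        [/\ [disjoint X1 & S], [disjoint X2 & S] & [disjoint X3 & S]]
      & [/\ S :|: X1 \in E, S :|: X2 \in E & S :|: X3 \in E]] /\
    [/\ [/\ #|X1 :&: A| = 2, #|X2 :&: A| = 2, #|X1 :&: X2| = 2
          & #|X1 :&: X2 :&: A| = 2],
        #|X3 :&: A| = 0 &
        [/\ #|X1 :&: X3| = 1 & #|X2 :&: X3| = 1]].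

Definition proto_balancer (T : finType) (k : nat) (E : {set {set T}})
  (A B : {set T}) : Prop :=
  AB_proto_balancer k E A B \/ AB_proto_balancer k E B A.

(* Main.v *)
Require Import Defs.
From mathcomp Require Import all_boot zify.
Set Implicit Arguments. Unset Strict Implicit. Unset Printing Implicit Defensive.

Lemma bigmin_le (I : eqType) (r : seq I) (P : pred I) (F : I -> nat) m i0 :
  i0 \in r -> P i0 -> \big[minn/m]_(i <- r | P i) F i <= F i0.
Proof.
elim: r => [//|j r IH]; rewrite inE big_cons => /orP [/eqP <- -> | Hr Hp].
  exact: geq_minl.
case: (P j); last exact: IH.
exact: leq_trans (geq_minr _ _) (IH Hr Hp).
Qed.

Ltac simp := repeat (rewrite ?eqxx ?orbF ?andbF ?orbT ?andbT /=; match goal with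
  | H : is_true (?a != ?b) |- context [?a == ?b] => rewrite (negbTE H)
  | H : is_true (?a != ?b) |- context [?b == ?a] => rewrite [b == a]eq_sym (negbTE H)
  | H : is_true (?a \notin ?C) |- context [?a \in ?C] => rewrite (negbTE H)
  | H : is_true (?a \in ?C) |- context [?a \in ?C] => rewrite H
  end); rewrite ?eqxx ?orbF ?andbF ?orbT ?andbT /=.
Ltac zsplit z := repeat (simp; match goal with |- context [z == ?w] => case: (z =P w) => [->|/eqP ?] end); simp.
Ltac setsolve := let z := fresh "z" in apply/setP => z; rewrite !inE; zsplit z.

Lemma neqC (T : finType) (C : {set T}) a x : a \in C -> x \notin C -> a != x.
Proof. by move=> Ha Hx; apply/eqP => e; move: Hx; rewrite -e Ha. Qed.

Lemma card3 (T : finType) (a b c : T) : a != b -> a != c -> b != c -> #|[set a; b; c]| = 3.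
Proof.
move=> ab ac bc; have -> : [set a; b; c] = a |: [set b; c] by setsolve.
by rewrite cardsU1 cards2 bc !inE negb_or ab ac.
Qed.

Lemma k3arith k : 3 <= k -> 1 + (1 + (k - 3)) = k.-1.
Proof. lia. Qed.

Ltac perm3 := apply/setP => ?; rewrite !inE; repeat match goal with |- context [?z == ?w] => case: (z == w) end; done.

Lemma pick1 (T : finType) (Q : {set T}) : 0 < #|Q| -> exists y, y \in Q.
Proof. by rewrite card_gt0 => /set0Pn. Qed.

Lemma pick2 (T : finType) (Q : {set T}) x : 1 < #|Q| -> x \in Q -> exists2 y, y \in Q & y != x.
Proof.
move=> HQ xQ; move: HQ; rewrite (cardsD1 x) xQ add1n ltnS card_gt0 => /set0Pn [y].
by rewrite !inE => /andP [yx yQ]; exists y.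
Qed.

Lemma cardW (T : finType) k (S : {set T}) p q : 3 <= k -> #|S| = k - 3 -> p \notin S -> q \notin S -> p != q ->
  #|S :|: [set p; q]| = k.-1.
Proof.
move=> k3 HS pS qS pq.
have -> : S :|: [set p; q] = p |: (q |: S).
  by apply/setP => z; rewrite !inE; case: (z \in S); case: (z == p); case: (z == q).
rewrite !cardsU1 HS (negbTE qS) !inE negb_or pS pq /=; exact: k3arith.
Qed.

Lemma PB_D (T : finType) k E (C D D' : {set T}) : AB_proto_balancer k E C D -> AB_proto_balancer k E C D'.
Proof. by []. Qed.

Section S.
Variables (T : finType) (k : nat) (E : {set {set T}}).

Definition Nb (S : {set T}) p q :=
  [set v | [&& S :|: [set p; q; v] \in E, v \notin S, v != p & v != q]].

Lemma min_le_codeg (W : {set T}) : #|W| = k.-1 -> min_codeg k E <= codeg E W.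
Proof. move=> HW; rewrite /min_codeg; apply: bigmin_le; first by rewrite mem_index_enum. by rewrite HW. Qed.

Lemma codeg_le_Nb (S : {set T}) (p q : T) : is_kgraph k E -> 3 <= k -> #|S| = k - 3 -> p \notin S -> q \notin S -> p != q ->
  codeg E (S :|: [set p; q]) <= #|Nb S p q|.
Proof.
move=> Hk k3 HS pS qS pq.
have HW : #|S :|: [set p; q]| = k.-1.
  have -> : S :|: [set p; q] = p |: (q |: S).
    apply/setP => z; rewrite !inE.
    by case: (z \in S); case: (z == p); case: (z == q).
  rewrite !cardsU1 HS (negbTE qS) !inE negb_or pS pq /=.
  lia.
rewrite /codeg.
have sub : [set e in E | S :|: [set p; q] \subset e] \subset (fun v => S :|: [set p; q; v]) @: Nb S p q.
  apply/subsetP => e; rewrite inE => /andP [eE We].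
  have He : #|e| = k by apply: Hk.
  have : #|e :\: (S :|: [set p; q])| == 1.
    by rewrite cardsD (setIidPr We) He HW; apply/eqP; lia.
  case/cards1P => v Hv.
  have ve : v \in e :\: (S :|: [set p; q]) by rewrite Hv set11.
  have eq : e = S :|: [set p; q; v].
    apply/setP => z; rewrite !inE.
    case ze: (z \in e).
    - case zW: (z \in S :|: [set p; q]).
        by move: zW; rewrite !inE => /orP [->|/orP [->|->]]; rewrite ?orbT.
      have : z \in e :\: (S :|: [set p; q]) by rewrite inE zW ze.
      by rewrite Hv inE => ->; rewrite !orbT.
    - apply/esym/negbTE; apply: contraFN ze => /orP [zS|/orP [/orP [/eqP->|/eqP->]|/eqP->]].
      + by apply: (subsetP We); rewrite inE zS.
      + by apply: (subsetP We); rewrite !inE eqxx orbT.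
      + by apply: (subsetP We); rewrite !inE eqxx !orbT.
      + by move: ve; rewrite inE => /andP [].
  apply/imsetP; exists v => //.
  move: ve; rewrite !inE negb_or => /andP [/andP [vS]]; rewrite negb_or => /andP [vp vq] _.
  by rewrite -eq eE vS vp vq.
exact: leq_trans (subset_leq_card sub) (leq_imset_card _ _).
Qed.

Lemma mkPB (C D S : {set T}) a a' x x' y :
  #|S| = k - 3 -> a \in C -> a' \in C -> x \notin C -> x' \notin C -> y \notin C ->
  a != a' -> x != x' -> y != x -> y != x' ->
  a \notin S -> a' \notin S -> x \notin S -> x' \notin S -> y \notin S ->
  S :|: [set a; a'; x] \in E -> S :|: [set a; a'; x'] \in E -> S :|: [set x; x'; y] \in E ->
  AB_proto_balancer k E C D.
Proof.
move=> HS Ha Ha' Hx Hx' Hy aa' xx' yx yx' aS a'S xS x'S yS E1 E2 E3.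
have ax := neqC Ha Hx; have ax' := neqC Ha Hx'; have ay := neqC Ha Hy.
have a'x := neqC Ha' Hx; have a'x' := neqC Ha' Hx'; have a'y := neqC Ha' Hy.
exists S, [set a; a'; x], [set a; a'; x'], [set x; x'; y].
split; split.
- by [].
- by split; rewrite card3 // eq_sym.
- by split; rewrite -setI_eq0; apply/eqP; setsolve.
- by split.
- split.
  + have -> : [set a; a'; x] :&: C = [set a; a'] by setsolve.
    by rewrite cards2 aa'.
  + have -> : [set a; a'; x'] :&: C = [set a; a'] by setsolve.
    by rewrite cards2 aa'.
  + have -> : [set a; a'; x] :&: [set a; a'; x'] = [set a; a'] by setsolve.
    by rewrite cards2 aa'.
  + have -> : [set a; a'; x] :&: [set a; a'; x'] :&: C = [set a; a'] by setsolve.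
    by rewrite cards2 aa'.
- have -> : [set x; x'; y] :&: C = set0 by setsolve.
  by rewrite cards0.
- split.
  + have -> : [set a; a'; x] :&: [set x; x'; y] = [set x] by setsolve.
    by rewrite cards1.
  + have -> : [set a; a'; x'] :&: [set x; x'; y] = [set x'] by setsolve.
    by rewrite cards1.
Qed.

Lemma diam (A B S : {set T}) p q u v :
  A :&: B = set0 -> 3 <= k -> #|S| = k - 3 -> p \notin S -> q \notin S -> p != q ->
  u \in Nb S p q -> v \in Nb S p q -> u \in A -> v \in B -> AB_diamond k E A B.
Proof.
move=> AB k3 HS pS qS pq; rewrite !inE => /and4P [Eu uS up uq] /and4P [Ev vS vp vq] uA vB.
have uv : u != v.
  apply/eqP => e; have : u \in A :&: B by rewrite inE uA e vB.
  by rewrite AB inE.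
exists u, v; split; [exact: uA|exact: vB|].
exists (S :|: [set p; q; u]), (S :|: [set p; q; v]); split; [exact: Eu|exact: Ev| | |].
- have -> : (S :|: [set p; q; u]) :&: (S :|: [set p; q; v]) = p |: (q |: S).
    by apply/setP => z; rewrite !inE; zsplit z; case: (z \in S).
  rewrite !cardsU1 HS (negbTE qS) !inE negb_or pS pq /=.
  exact: k3arith.
- by rewrite !inE; simp.
- by rewrite !inE; simp.
Qed.

Lemma mix (A B S : {set T}) p q u v :
  A :&: B = set0 -> A :|: B = setT -> ~ AB_diamond k E A B ->
  3 <= k -> #|S| = k - 3 -> p \notin S -> q \notin S -> p != q ->
  u \in Nb S p q -> v \in Nb S p q -> (u \in A) = (v \in A).
Proof.
move=> AB AuB nD k3 HS pS qS pq Hu Hv.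
have BC : forall z, (z \in B) = (z \notin A).
  move=> z; have : z \in A :|: B by rewrite AuB inE.
  rewrite inE; case zA: (z \in A); case zB: (z \in B) => //= _.
  have : z \in A :&: B by rewrite inE zA zB.
  by rewrite AB inE.
case uA: (u \in A); case vA: (v \in A) => //.
- by case: nD; apply: (diam AB k3 HS pS qS pq Hu Hv) => //; rewrite BC vA.
- by case: nD; apply: (diam AB k3 HS pS qS pq Hv Hu) => //; rewrite BC uA.
Qed.

Lemma core (c : nat) (C D S : {set T}) a a' x :
  (forall (S : {set T}) p q, #|S| = k - 3 -> p \notin S -> q \notin S -> p != q -> c <= #|Nb S p q|) ->
  (forall (S : {set T}) p q u v, #|S| = k - 3 -> p \notin S -> q \notin S -> p != q ->
      u \in Nb S p q -> v \in Nb S p q -> (u \in C) = (v \in C)) ->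
  1 < c -> #|T| < 3 * c ->
  #|S| = k - 3 -> a \in C -> a' \in C -> x \notin C -> a != a' -> a \notin S -> a' \notin S ->
  x \in Nb S a a' ->
  AB_proto_balancer k E C D \/ AB_proto_balancer k E (~: C) D.
Proof.
move=> Hlb Hmix c2 Tc HS aC a'C xC aa' aS a'S Hx.
have Q2 : 1 < #|Nb S a a'| by apply: leq_trans c2 (Hlb _ _ _ HS aS a'S aa').
have [x' Hx' x'x] := pick2 Q2 Hx.
have x'C : x' \notin C by rewrite (Hmix _ _ _ _ _ HS aS a'S aa' Hx' Hx).
have Hx0 := Hx; have Hx'0 := Hx'.
move: Hx Hx'; rewrite !inE => /and4P [Ex xS xa xa'] /and4P [Ex' x'S x'a x'a'].
have xx' : x != x' by rewrite eq_sym.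
have P2 : 1 < #|Nb S x x'| by apply: leq_trans c2 (Hlb _ _ _ HS xS x'S xx').
have [y Hy] := pick1 (ltnW P2).
case yC: (y \in C); last first.
  left; move: Hy; rewrite !inE => /and4P [Ey yS yx yx'].
  by apply: (@mkPB C D S a a' x x' y) => //; rewrite yC.
have [y' Hy' y'y] := pick2 P2 Hy.
have y'C : y' \in C by rewrite (Hmix _ _ _ _ _ HS xS x'S xx' Hy' Hy).
have Hy0 := Hy; have Hy'0 := Hy'.
move: Hy Hy'; rewrite !inE => /and4P [Ey yS yx yx'] /and4P [Ey' y'S y'x y'x'].
have yy' : y != y' by rewrite eq_sym.
have [z Hz] := pick1 (leq_trans (ltnW c2) (Hlb _ _ _ HS yS y'S yy')).
have Hz0 := Hz.
move: Hz; rewrite !inE => /and4P [Ez zS zy zy'].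
case zC: (z \in C).
  right; apply: (@mkPB (~: C) D S x x' y y' z) => //; rewrite ?inE ?yC ?y'C ?zC //.
exfalso.
have ax : a != x by apply: neqC aC xC.
have a'x : a' != x by apply: neqC a'C xC.
have yx0 : y != x by apply: neqC yC xC.
have y'x0 : y' != x by apply: neqC y'C xC.
have Ha'1 : a' \in Nb S a x.
  rewrite !inE a'S eq_sym aa' a'x andbT.
  have -> : [set a; x; a'] = [set a; a'; x] by perm3.
  by rewrite ?andbT.
have N1C : Nb S a x \subset C.
  by apply/subsetP => w Hw; rewrite (Hmix _ _ _ _ _ HS aS xS ax Hw Ha'1).
have N2C : Nb S x x' \subset C.
  by apply/subsetP => w Hw; rewrite (Hmix _ _ _ _ _ HS xS x'S xx' Hw Hy0).
have N3C : Nb S y y' \subset ~: C.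
  by apply/subsetP => w Hw; rewrite inE (Hmix _ _ _ _ _ HS yS y'S yy' Hw Hz0) zC.
have Hx'4 : x' \in Nb S y x.
  rewrite !inE x'S -(eq_sym y) yx' x'x andbT /=.
  have -> : [set y; x; x'] = [set x; x'; y] by perm3.
  by rewrite ?andbT.
have N4C : Nb S y x \subset ~: C.
  by apply/subsetP => w Hw; rewrite inE (Hmix _ _ _ _ _ HS yS xS yx Hw Hx'4).
have D12 : Nb S a x :&: Nb S x x' = set0.
  apply/setP => w; rewrite inE [w \in set0]inE; apply/negP => /andP [Hw1 Hw2].
  move: (Hw1) (Hw2); rewrite !inE => /and4P [Ew1 wS wa wx] /and4P [Ew2 _ _ wx'].
  have xw : x != w by rewrite eq_sym.
  have Ha : a \in Nb S x w.
    rewrite !inE; apply/and4P; split; [|done|by rewrite // eq_sym|by rewrite eq_sym].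
    have -> : [set x; w; a] = [set a; x; w] by perm3.
    by rewrite ?andbT.
  have Hx'w : x' \in Nb S x w.
    rewrite !inE; apply/and4P; split; [|done|by rewrite // eq_sym|by rewrite eq_sym].
    have -> : [set x; w; x'] = [set x; x'; w] by perm3.
    by rewrite ?andbT.
  by move: (Hmix _ _ _ _ _ HS xS wS xw Ha Hx'w); rewrite aC (negbTE x'C).
have D34 : Nb S y y' :&: Nb S y x = set0.
  apply/setP => w; rewrite inE [w \in set0]inE; apply/negP => /andP [Hw1 Hw2].
  move: (Hw1) (Hw2); rewrite !inE => /and4P [Ew1 wS wy wy'] /and4P [Ew2 _ _ wx].
  have yw : y != w by rewrite eq_sym.
  have Hy'w : y' \in Nb S y w.
    rewrite !inE; apply/and4P; split; [|done|by rewrite // eq_sym|by rewrite eq_sym].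
    have -> : [set y; w; y'] = [set y; y'; w] by perm3.
    by rewrite ?andbT.
  have Hxw : x \in Nb S y w.
    rewrite !inE; apply/and4P; split; [|done|by rewrite // eq_sym|by rewrite eq_sym].
    have -> : [set y; w; x] = [set y; x; w] by perm3.
    by rewrite ?andbT.
  by move: (Hmix _ _ _ _ _ HS yS wS yw Hy'w Hxw); rewrite y'C (negbTE xC).
have L1 : #|Nb S a x| + #|Nb S x x'| <= #|C|.
  by rewrite -cardsUI D12 cards0 addn0; apply: subset_leq_card; rewrite subUset N1C N2C.
have L2 : #|Nb S y y'| + #|Nb S y x| <= #|~: C|.
  by rewrite -cardsUI D34 cards0 addn0; apply: subset_leq_card; rewrite subUset N3C N4C.
have := cardsC C.
have := Hlb _ _ _ HS aS xS ax.
have := Hlb _ _ _ HS xS x'S xx'.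
have := Hlb _ _ _ HS yS y'S yy'.
have := Hlb _ _ _ HS yS xS yx.
move: L1 L2 Tc; clear; lia.
Qed.
End S.

Theorem lemma7p4 (k n : nat) (T : finType) (E : {set {set T}}) (A B : {set T}) :
  3 <= k -> 2 * k - 4 <= n -> #|T| = n ->
  is_kgraph k E ->
  n < 3 * min_codeg k E ->
  A :&: B = set0 -> A :|: B = setT -> 0 < #|A| -> 0 < #|B| ->
  ~ AB_diamond k E A B ->
  proto_balancer k E A B.
Proof.
move=> k3 nk Tn Hk Hc AB AuB A0 B0 nD.
set c := min_codeg k E in Hc.
have BC : B = ~: A.
  apply/setP => z; rewrite inE.
  have : z \in A :|: B by rewrite AuB inE.
  rewrite inE; case zA: (z \in A); case zB: (z \in B) => //= _.
  have : z \in A :&: B by rewrite inE zA zB.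
  by rewrite AB inE.
have Hlb : forall (S : {set T}) p q, #|S| = k - 3 -> p \notin S -> q \notin S -> p != q -> c <= #|Nb E S p q|.
  move=> S p q HS pS qS pq.
  exact: leq_trans (min_le_codeg E (cardW k3 HS pS qS pq)) (codeg_le_Nb Hk k3 HS pS qS pq).
have HmixA : forall (S : {set T}) p q u v, #|S| = k - 3 -> p \notin S -> q \notin S -> p != q ->
      u \in Nb E S p q -> v \in Nb E S p q -> (u \in A) = (v \in A).
  move=> S p q u v; exact: mix AB AuB nD k3.
have HmixC : forall (S : {set T}) p q u v, #|S| = k - 3 -> p \notin S -> q \notin S -> p != q ->
      u \in Nb E S p q -> v \in Nb E S p q -> (u \in ~: A) = (v \in ~: A).
  by move=> S p q u v HS pS qS pq Hu Hv; rewrite !inE (HmixA S p q u v).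
have [a aA] := pick1 A0.
have [x xB] := pick1 B0.
have xA : x \notin A by move: xB; rewrite BC inE.
have ax : a != x by apply: neqC aA xA.
have Hsz : k - 3 <= #|~: [set a; x]|.
  have := cardsC [set a; x]; rewrite cards2 ax Tn; lia.
have [S] := pick1 (Q := [set S : {set T} | S \subset ~: [set a; x] & #|S| == k - 3]) ltac:(by rewrite cards_draws bin_gt0).
rewrite inE => /andP [Ssub /eqP HS].
have aS : a \notin S by apply/negP => /(subsetP Ssub); rewrite !inE eqxx.
have xS : x \notin S by apply/negP => /(subsetP Ssub); rewrite !inE eqxx orbT.
have c1 : 0 < c by move: Hc; case: (c) => //; rewrite muln0.
have [v Hv] := pick1 (leq_trans c1 (Hlb _ _ _ HS aS xS ax)).
have Hv0 := Hv.
move: Hv; rewrite !inE => /and4P [Ev vS va vx].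
have c2 : 1 < c.
  have : #|[set a; x; v]| <= #|T| by apply: max_card.
  rewrite card3 // ?(eq_sym _ v) // => H3.
  by move: Hc H3; rewrite Tn; clear; lia.
have Tc : #|T| < 3 * c by rewrite Tn.
rewrite /proto_balancer.
case vA: (v \in A).
- have av : a != v by rewrite eq_sym.
  have Hx : x \in Nb E S a v.
    rewrite !inE; apply/and4P; split; [|done|by rewrite eq_sym|by rewrite eq_sym].
    have -> : [set a; v; x] = [set a; x; v] by perm3.
    done.
  case: (core B Hlb HmixA c2 Tc HS aA vA xA av aS vS Hx).
  + by left.
  + by rewrite -BC => H; right; apply: PB_D H.
- have vC : v \in ~: A by rewrite inE vA.
  have xC : x \in ~: A by rewrite inE.
  have aC : a \notin ~: A by rewrite inE aA.
  have xv : x != v by rewrite eq_sym.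
  have Ha : a \in Nb E S x v.
    rewrite !inE; apply/and4P; split; [|done|done|by rewrite eq_sym].
    have -> : [set x; v; a] = [set a; x; v] by perm3.
    done.
  case: (core A Hlb HmixC c2 Tc HS xC vC aC xv xS vS Ha).
  + by rewrite -BC => H; right; apply: PB_D H.
  + by rewrite setCK => H; left; apply: PB_D H.
Qed.
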